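(* Let $A\in\mathbb{C}^{m\times n}$ have rank $r$, $B\in\mathbb{C}^{m\times n}$ have rank $s$, and $E=B-A$. Then $$\|B^{\dagger}-A^{\dagger}\|_{F}^{2}\geq\max\big\{\delta'_{1}+\|B^{\dagger}EA^{\dagger}\|_{F}^{2},\ \delta'_{2}+\|A^{\dagger}EB^{\dagger}\|_{F}^{2}\big\},$$ where $$\delta'_{1}:=\frac{\|E\|_{F}^{2}-\min\big\{\|B\|_{2}^{2}\|AA^{\dagger}EB^{\dagger}\|_{F}^{2},\|A\|_{2}^{2}\|A^{\dagger}EB^{\dagger}B\|_{F}^{2}\big\}}{\max\big\{\|A\|_{2}^{4},\|B\|_{2}^{4}\big\}},$$ $$\delta'_{2}:=\frac{\|E\|_{F}^{2}-\min\big\{\|A\|_{2}^{2}\|BB^{\dagger}EA^{\dagger}\|_{F}^{2},\|B\|_{2}^{2}\|B^{\dagger}EA^{\dagger}A\|_{F}^{2}\big\}}{\max\big\{\|A\|_{2}^{4},\|B\|_{2}^{4}\big\}}.$$ In particular, if $s=r$, then $$\|B^{\dagger}-A^{\dagger}\|_{F}^{2}\geq\max\big\{\varepsilon'_{1}+\|B^{\dagger}EA^{\dagger}\|_{F}^{2},\ \varepsilon'_{2}+\|A^{\dagger}EB^{\dagger}\|_{F}^{2}\big\},$$ where $$\varepsilon'_{1}:=\frac{\|E\|_{F}^{2}-\min\big\{\|A\|_{2}^{2}\|BB^{\dagger}EA^{\dagger}\|_{F}^{2},\|B\|_{2}^{2}\|B^{\dagger}EA^{\dagger}A\|_{F}^{2}\big\}}{\|A\|_{2}^{2}\|B\|_{2}^{2}},$$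 $$\varepsilon'_{2}:=\frac{\|E\|_{F}^{2}-\min\big\{\|B\|_{2}^{2}\|AA^{\dagger}EB^{\dagger}\|_{F}^{2},\|A\|_{2}^{2}\|A^{\dagger}EB^{\dagger}B\|_{F}^{2}\big\}}{\|A\|_{2}^{2}\|B\|_{2}^{2}}.$$
   Context: $M^{\dagger}$ denotes the Moore–Penrose inverse of $M$, $\|\cdot\|_{2}$ the spectral norm and $\|\cdot\|_{F}$ the Frobenius norm. *)

(* Defs.v *)
From HB Require Import structures.
From mathcomp Require Import all_boot all_order all_algebra.
Set Implicit Arguments. Unset Strict Implicit. Unset Printing Implicit Defensive.
Import Order.TTheory GRing.Theory Num.Theory.
Local Open Scope ring_scope.

(* Scalars: an arbitrary numClosedFieldType C (e.g. the complex numbers). *)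

Definition ctrmx (C : numClosedFieldType) (m n : nat) (A : 'M[C]_(m, n)) : 'M[C]_(n, m) :=
  map_mx Num.conj (A^T).

Definition vnorm (C : numClosedFieldType) (n : nat) (x : 'cV[C]_n) : C :=
  sqrtC (\sum_(i < n) `|x i ord0| ^+ 2).

Definition fnorm (C : numClosedFieldType) (m n : nat) (A : 'M[C]_(m, n)) : C :=
  sqrtC (\sum_(i < m) \sum_(j < n) `|A i j| ^+ 2).

Definition is_spec_norm (C : numClosedFieldType) (m n : nat) (A : 'M[C]_(m, n)) (c : C) : Prop :=
  (exists x : 'cV[C]_n, vnorm x <= 1 /\ vnorm (A *m x) = c) /\
  (forall x : 'cV[C]_n, vnorm x <= 1 -> vnorm (A *m x) <= c).

Definition is_pinv (C : numClosedFieldType) (m n : nat) (A : 'M[C]_(m, n)) (X : 'M[C]_(n, m)) : Prop :=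
  [/\ A *m X *m A = A, X *m A *m X = X,
      ctrmx (A *m X) = A *m X & ctrmx (X *m A) = X *m A].

(* Main.v *)
Require Import Defs.
From HB Require Import structures.
From mathcomp Require Import all_boot all_order all_algebra.
From mathcomp Require Import ring.
Set Implicit Arguments. Unset Strict Implicit. Unset Printing Implicit Defensive.
Import Order.TTheory GRing.Theory Num.Theory.
Local Open Scope ring_scope.

Lemma ctrmxK (C : numClosedFieldType) m n (X : 'M[C]_(m, n)) : ctrmx (ctrmx X) = X.
Proof. by apply/matrixP => i j; rewrite !mxE conjCK. Qed.

Lemma ctrmxM (C : numClosedFieldType) m n p (X : 'M[C]_(m, n)) (Y : 'M[C]_(n, p)) :
  ctrmx (X *m Y) = ctrmx Y *m ctrmx X.
Proof. by rewrite /ctrmx trmx_mul map_mxM. Qed.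

Lemma ctrmxD (C : numClosedFieldType) m n (X Y : 'M[C]_(m, n)) :
  ctrmx (X + Y) = ctrmx X + ctrmx Y.
Proof. by apply/matrixP => i j; rewrite !mxE rmorphD. Qed.

Lemma ctrmxN (C : numClosedFieldType) m n (X : 'M[C]_(m, n)) :
  ctrmx (- X) = - ctrmx X.
Proof. by apply/matrixP => i j; rewrite !mxE rmorphN. Qed.

Lemma ctrmxB (C : numClosedFieldType) m n (X Y : 'M[C]_(m, n)) :
  ctrmx (X - Y) = ctrmx X - ctrmx Y.
Proof. by rewrite ctrmxD ctrmxN. Qed.

Lemma ctrmxZ (C : numClosedFieldType) m n (c : C) (X : 'M[C]_(m, n)) :
  ctrmx (c *: X) = c^* *: ctrmx X.
Proof. by apply/matrixP => i j; rewrite !mxE rmorphM. Qed.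

Lemma ctrmx1 (C : numClosedFieldType) n : ctrmx (1%:M : 'M[C]_n) = 1%:M.
Proof. by rewrite /ctrmx trmx1 map_mx1. Qed.

Definition nn (C : numClosedFieldType) m n (X : 'M[C]_(m, n)) : C :=
  \sum_i \sum_j `|X i j| ^+ 2.

Lemma nnE (C : numClosedFieldType) m n (X : 'M[C]_(m, n)) :
  nn X = \tr (X *m ctrmx X).
Proof.
rewrite /nn /mxtrace; apply: eq_bigr => i _; rewrite mxE.
by apply: eq_bigr => j _; rewrite !mxE normCK.
Qed.

Lemma nnE' (C : numClosedFieldType) m n (X : 'M[C]_(m, n)) :
  nn X = \tr (ctrmx X *m X).
Proof. by rewrite mxtrace_mulC nnE. Qed.

Lemma nn_ge0 (C : numClosedFieldType) m n (X : 'M[C]_(m, n)) : 0 <= nn X.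
Proof. by apply: sumr_ge0 => i _; apply: sumr_ge0 => j _; rewrite exprn_ge0. Qed.

Lemma nnC (C : numClosedFieldType) m n (X : 'M[C]_(m, n)) : nn (ctrmx X) = nn X.
Proof. by rewrite nnE ctrmxK -nnE'. Qed.

Lemma nnN (C : numClosedFieldType) m n (X : 'M[C]_(m, n)) : nn (- X) = nn X.
Proof. by apply: eq_bigr => i _; apply: eq_bigr => j _; rewrite mxE normrN. Qed.

Lemma nn0 (C : numClosedFieldType) m n : nn (0 : 'M[C]_(m, n)) = 0.
Proof. by apply: big1 => i _; apply: big1 => j _; rewrite mxE normr0 expr0n. Qed.

Lemma nnZ (C : numClosedFieldType) m n (c : C) (X : 'M[C]_(m, n)) :
  nn (c *: X) = `|c| ^+ 2 * nn X.
Proof.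
rewrite /nn mulr_sumr; apply: eq_bigr => i _; rewrite mulr_sumr.
by apply: eq_bigr => j _; rewrite mxE normrM exprMn.
Qed.

Lemma nn_eq0 (C : numClosedFieldType) m n (X : 'M[C]_(m, n)) : nn X = 0 -> X = 0.
Proof.
move=> /eqP; rewrite psumr_eq0 => [/allP H|i _]; last first.
  by apply: sumr_ge0 => j _; rewrite exprn_ge0.
apply/matrixP => i j; move/implyP: (H i (mem_index_enum _)) => /(_ isT).
rewrite psumr_eq0 => [/allP H2|k _]; last by rewrite exprn_ge0.
move/implyP: (H2 j (mem_index_enum _)) => /(_ isT).
by rewrite sqrf_eq0 normr_eq0 mxE => /eqP.
Qed.

Lemma fnormE (C : numClosedFieldType) m n (X : 'M[C]_(m, n)) : fnorm X ^+ 2 = nn X.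
Proof. by rewrite /fnorm sqrtCK. Qed.

Lemma cancel_mid (F : fieldType) n r (Cb : 'M[F]_(n, r)) (Rb : 'M[F]_(r, n))
  (D : 'M[F]_(r, n)) (R' : 'M[F]_(n, r)) (X Y : 'M[F]_r) :
  D *m Cb = 1%:M -> Rb *m R' = 1%:M -> Cb *m X *m Rb = Cb *m Y *m Rb -> X = Y.
Proof.
move=> hD hR h; have := congr1 (fun M => D *m M *m R') h.
by rewrite /= !mulmxA hD !mul1mx -!mulmxA hR !mulmx1.
Qed.

Lemma tr_idem (F : fieldType) n (P : 'M[F]_n) : P *m P = P -> \tr P = (\rank P)%:R.
Proof.
move=> hP.
have hPb := mulmx_base P.
have hD := mulVpmx (col_base_full P).
have hR := mulmxVp (row_base_free P).
have e : row_base P *m col_base P = 1%:M.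
  apply: (cancel_mid hD hR).
  by rewrite mulmx1 (mulmxA (col_base P) (row_base P)) hPb -mulmxA hPb hP.
by rewrite -{1}hPb mxtrace_mulC e mxtrace1.
Qed.

Lemma trPZ0 (C : numClosedFieldType) n (P : 'M[C]_n) (Z : 'M[C]_n) :
  P *m P = P -> \tr (P *m Z *m (1%:M - P)) = 0.
Proof.
move=> hP; rewrite mxtrace_mulC mulmxA mulmxBl mul1mx hP subrr mul0mx.
exact: mxtrace0.
Qed.

Lemma trQZ0 (C : numClosedFieldType) n (P : 'M[C]_n) (Z : 'M[C]_n) :
  P *m P = P -> \tr ((1%:M - P) *m Z *m P) = 0.
Proof.
move=> hP; rewrite mxtrace_mulC mulmxA mulmxBr mulmx1 hP subrr mul0mx.
exact: mxtrace0.
Qed.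

Lemma nnD (C : numClosedFieldType) m n (X Y : 'M[C]_(m, n)) :
  nn (X + Y) = nn X + nn Y + \tr (X *m ctrmx Y) + \tr (Y *m ctrmx X).
Proof.
rewrite !nnE ctrmxD mulmxDl !mulmxDr !mxtraceD.
by ring.
Qed.

Lemma orthL (C : numClosedFieldType) m n (P : 'M[C]_m) (X Y : 'M[C]_(m, n)) :
  ctrmx P = P -> P *m P = P -> X = P *m X -> Y = (1%:M - P) *m Y ->
  nn (X + Y) = nn X + nn Y.
Proof.
move=> hH hP hX hY; rewrite nnD.
have HQ : ctrmx (1%:M - P) = 1%:M - P by rewrite ctrmxB ctrmx1 hH.
have -> : \tr (X *m ctrmx Y) = 0.
  rewrite hX hY ctrmxM HQ mulmxA -(mulmxA P).
  exact: trPZ0.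
have -> : \tr (Y *m ctrmx X) = 0.
  rewrite hX hY ctrmxM hH mulmxA -(mulmxA (1%:M - P)).
  exact: trQZ0.
by rewrite !addr0.
Qed.

Lemma orthR (C : numClosedFieldType) m n (Q : 'M[C]_n) (X Y : 'M[C]_(m, n)) :
  ctrmx Q = Q -> Q *m Q = Q -> X = X *m Q -> Y = Y *m (1%:M - Q) ->
  nn (X + Y) = nn X + nn Y.
Proof.
move=> hH hP hX hY; rewrite nnD.
have HQ : ctrmx (1%:M - Q) = 1%:M - Q by rewrite ctrmxB ctrmx1 hH.
have -> : \tr (X *m ctrmx Y) = 0.
  rewrite hX hY ctrmxM HQ mulmxA -(mulmxA X) mulmxBr mulmx1 hP subrr mulmx0 mul0mx.
  exact: mxtrace0.
have -> : \tr (Y *m ctrmx X) = 0.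
  rewrite hX hY ctrmxM hH mulmxA -(mulmxA Y) mulmxBl mul1mx hP subrr mulmx0 mul0mx.
  exact: mxtrace0.
by rewrite !addr0.
Qed.

Lemma vnormE (C : numClosedFieldType) n (x : 'cV[C]_n) : vnorm x = sqrtC (nn x).
Proof. by rewrite /vnorm /nn; congr sqrtC; apply: eq_bigr => i _; rewrite big_ord1. Qed.

Lemma spec_ge0 (C : numClosedFieldType) m n (B : 'M[C]_(m, n)) b :
  is_spec_norm B b -> 0 <= b.
Proof.
move=> [_ Hb]; have := Hb 0; rewrite vnormE nn0 sqrtC0 ler01 => /(_ isT).
by rewrite mulmx0 vnormE nn0 sqrtC0.
Qed.

Lemma spec_col (C : numClosedFieldType) m n (B : 'M[C]_(m, n)) b :
  is_spec_norm B b -> forall x : 'cV[C]_n, nn (B *m x) <= b ^+ 2 * nn x.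
Proof.
move=> hB x; have b0 := spec_ge0 hB; move: hB => [_ Hb].
case: (nn x =P 0) => [/nn_eq0 -> | nz].
  by rewrite mulmx0 !nn0 mulr0.
set s := sqrtC (nn x).
have spos : 0 < s by rewrite sqrtC_gt0 lt_def nn_ge0 andbT; apply/eqP.
have e : nn x = s ^+ 2 by rewrite sqrtCK.
have s0 : s != 0 by rewrite gt_eqF.
have ns : `|s^-1| = s^-1 by rewrite ger0_norm // invr_ge0 ltW.
have := Hb (s^-1 *: x); rewrite !vnormE nnZ ns e -exprMn mulVf // expr1n sqrtC1.
move=> /(_ (le_refl _)); rewrite -scalemxAr nnZ ns => h.
have h2 : s^-1 ^+ 2 * nn (B *m x) <= b ^+ 2.
  move: h; rewrite -(ler_pXn2r (_ : 0 < 2)%N) ?sqrtCK // ?nnegrE ?sqrtC_ge0 //.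
  by rewrite mulr_ge0 ?exprn_ge0 ?nn_ge0 // invr_ge0 ltW.
have -> : nn (B *m x) = s ^+ 2 * (s^-1 ^+ 2 * nn (B *m x)).
  by rewrite mulrA -exprMn divff // expr1n mul1r.
by rewrite mulrC ler_wpM2r // exprn_ge0 // ltW.
Qed.

Lemma nn_col (C : numClosedFieldType) m n (X : 'M[C]_(m, n)) :
  nn X = \sum_j nn (col j X).
Proof.
rewrite /nn exchange_big; apply: eq_bigr => j _; apply: eq_bigr => i _.
by rewrite big_ord1 mxE.
Qed.

Lemma mx_bound (C : numClosedFieldType) m n (M : 'M[C]_(m, n)) c :
  (forall x : 'cV[C]_n, nn (M *m x) <= c * nn x) ->
  forall p (X : 'M[C]_(n, p)), nn (M *m X) <= c * nn X.
Proof.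
move=> h p X; rewrite (nn_col (M *m X)) (nn_col X) mulr_sumr.
by apply: ler_sum => j _; rewrite !colE -mulmxA -colE.
Qed.

Lemma spec_row (C : numClosedFieldType) m n (B : 'M[C]_(m, n)) b :
  is_spec_norm B b -> forall y : 'cV[C]_m, nn (ctrmx B *m y) <= b ^+ 2 * nn y.
Proof.
move=> hB y; have b0 := spec_ge0 hB; have hc := spec_col hB.
set z := ctrmx B *m y.
have hz : nn z = \tr (ctrmx y *m (B *m z)).
  by rewrite nnE' {1}/z ctrmxM ctrmxK mulmxA.
have hz2 : \tr (ctrmx (B *m z) *m y) = nn z.
  by rewrite ctrmxM -mulmxA -/z -nnE'.
set t := b ^+ 2.
have t0 : 0 <= t by rewrite exprn_ge0.
have tr : t^* = t by rewrite conj_Creal // ger0_real.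
case: (t =P 0) => [t00 | tn0].
  have := hc z; rewrite -/t t00 mul0r => h.
  have : nn (B *m z) = 0 by apply/eqP; rewrite eq_le h nn_ge0.
  move/nn_eq0 => Bz0; rewrite hz Bz0 mulmx0 mxtrace0.
  by rewrite mulr_ge0 ?nn_ge0.
have tpos : 0 < t by rewrite lt_def t0 andbT; apply/eqP.
set v := B *m z - t *: y.
have hv : nn v = nn (B *m z) - t * nn z - t * (nn z - t * nn y).
  rewrite nnE' /v ctrmxB ctrmxZ tr mulmxBl !mulmxBr.
  rewrite !linearB /= -!scalemxAl -!scalemxAr !linearZ /=.
  by rewrite -nnE' -nnE' hz2 -hz; ring.
have := nn_ge0 v; rewrite hv => h.
have h1 : nn (B *m z) - t * nn z - t * (nn z - t * nn y)
          <= t * nn z - t * nn z - t * (nn z - t * nn y).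
  by rewrite lerD2r lerD2r hc.
have := le_trans h h1.
have -> : t * nn z - t * nn z - t * (nn z - t * nn y) = t * (t * nn y - nn z) by ring.
by rewrite pmulr_rge0 // subr_ge0.
Qed.

Lemma spec_mxl (C : numClosedFieldType) m n (B : 'M[C]_(m, n)) b :
  is_spec_norm B b -> forall p (X : 'M[C]_(n, p)), nn (B *m X) <= b ^+ 2 * nn X.
Proof. by move=> hB; apply: mx_bound; apply: spec_col. Qed.

Lemma spec_mxr (C : numClosedFieldType) m n (B : 'M[C]_(m, n)) b :
  is_spec_norm B b -> forall p (X : 'M[C]_(p, m)), nn (X *m B) <= b ^+ 2 * nn X.
Proof.
move=> hB p X; rewrite -nnC ctrmxM -(nnC X).
by apply: mx_bound; apply: spec_row.
Qed.

Lemma zm1 (V : zmodType) (a b x y : V) : a - b = (- (x - y) + (a - y)) + - (b - x).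
Proof.
by rewrite !opprB [y - x + _]addrC -(addrA a) (addrA (-y)) addNr add0r -(addrA a) (addrA (-x)) addNr add0r.
Qed.

Lemma idemC (C : numClosedFieldType) n (P : 'M[C]_n) :
  P *m P = P -> (1%:M - P) *m (1%:M - P) = 1%:M - P.
Proof. by move=> hP; rewrite mulmxBl mul1mx mulmxBr mulmx1 hP subrr subr0. Qed.

Lemma hermC (C : numClosedFieldType) n (P : 'M[C]_n) :
  ctrmx P = P -> ctrmx (1%:M - P) = 1%:M - P.
Proof. by move=> h; rewrite ctrmxB ctrmx1 h. Qed.

Lemma D1 (C : numClosedFieldType) m n (A B : 'M[C]_(m, n)) (Ad Bd : 'M[C]_(n, m)) :
  is_pinv A Ad -> is_pinv B Bd ->
  nn (Bd - Ad) = nn (Bd *m (B - A) *m Ad) + nn (Bd *m (1%:M - A *m Ad))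
                 + nn ((1%:M - Bd *m B) *m Ad).
Proof.
case=> a1 a2 a3 a4 [b1 b2 b3 b4].
have iQA : A *m Ad *m (A *m Ad) = A *m Ad by rewrite mulmxA a1.
have iPB : Bd *m B *m (Bd *m B) = Bd *m B by rewrite mulmxA b2.
set T1 := - (Bd *m ((B - A) *m Ad)).
set T2 := Bd *m (1%:M - A *m Ad).
set T3 := - ((1%:M - Bd *m B) *m Ad).
have e : Bd - Ad = T1 + T2 + T3.
  rewrite /T1 /T2 /T3 mulmxBl mulmxBr !mulmxBr mulmx1 mulmxBl mul1mx !mulmxA.
  exact: zm1.
have hT12 : T1 + T2 = Bd *m (- ((B - A) *m Ad) + (1%:M - A *m Ad)).
  by rewrite mulmxDr mulmxN.
rewrite e (orthL (P := Bd *m B)) //; last 2 first.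
- by rewrite hT12 mulmxA b2.
- by rewrite /T3 mulmxN mulmxA idemC.
rewrite (orthR (Q := A *m Ad)) ?hermC //; last 2 first.
- by rewrite /T1 mulNmx -!mulmxA (mulmxA Ad A Ad) a2.
- by rewrite /T2 -mulmxA idemC.
by rewrite /T1 /T3 !nnN mulmxA.
Qed.

Lemma zm2 (V : zmodType) (a b x y : V) : a - b = (x - y) + (a - x) + - (b - y).
Proof.
by rewrite opprB [x - y + _]addrC -(addrA a) (addrA (-x)) addNr add0r -(addrA a) (addrA (-y)) addNr add0r.
Qed.

Lemma D2 (C : numClosedFieldType) m n (A B : 'M[C]_(m, n)) (Ad Bd : 'M[C]_(n, m)) :
  is_pinv A Ad -> is_pinv B Bd ->
  nn (B - A) = nn (A *m Ad *m (B - A) *m Bd *m B) + nn ((1%:M - A *m Ad) *m B)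
                 + nn (A *m (1%:M - Bd *m B)).
Proof.
case=> a1 a2 a3 a4 [b1 b2 b3 b4].
have iQA : A *m Ad *m (A *m Ad) = A *m Ad by rewrite mulmxA a1.
have iPB : Bd *m B *m (Bd *m B) = Bd *m B by rewrite mulmxA b2.
set X1 := (A *m Ad) *m ((B - A) *m (Bd *m B)).
set X2 := (1%:M - A *m Ad) *m B.
set X3 := - (A *m (1%:M - Bd *m B)).
have eX1 : X1 = A *m Ad *m B - A *m Bd *m B.
  rewrite /X1 mulmxBl mulmxBr; congr (_ - _).
    by rewrite (mulmxA B) b1.
  by rewrite mulmxA a1 mulmxA.
have e : B - A = X1 + X2 + X3.
  rewrite eX1 /X2 /X3 mulmxBl mul1mx mulmxBr mulmx1 mulmxA.
  exact: zm2.
have hX2 : X2 = X2 *m (Bd *m B) by rewrite /X2 -mulmxA (mulmxA B) b1.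
have hX1 : X1 = X1 *m (Bd *m B) by rewrite /X1 -(mulmxA (A *m Ad)) -(mulmxA (B - A)) iPB.
rewrite {1}e (orthR (Q := Bd *m B)) //; last 2 first.
- by rewrite mulmxDl -hX1 -hX2.
- by rewrite /X3 mulNmx -mulmxA idemC.
rewrite (orthL (P := A *m Ad)) ?hermC //; last 2 first.
- by rewrite /X1 (mulmxA (A *m Ad) (A *m Ad)) iQA.
- by rewrite /X2 mulmxA idemC.
by rewrite /X3 nnN /X1 !mulmxA.
Qed.

Lemma S1 (C : numClosedFieldType) m n (A B : 'M[C]_(m, n)) (Ad Bd : 'M[C]_(n, m)) b :
  is_pinv A Ad -> is_pinv B Bd -> is_spec_norm B b ->
  nn ((1%:M - A *m Ad) *m B) <= b ^+ 2 * nn (B *m Bd *m (1%:M - A *m Ad)).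
Proof.
case=> a1 a2 a3 a4 [b1 b2 b3 b4] hB.
have -> : (1%:M - A *m Ad) *m B = (1%:M - A *m Ad) *m (B *m Bd) *m B
  by rewrite -mulmxA b1.
apply: (le_trans (spec_mxr hB _)).
by rewrite -nnC ctrmxM b3 hermC.
Qed.

Lemma S2 (C : numClosedFieldType) m n (A B : 'M[C]_(m, n)) (Ad Bd : 'M[C]_(n, m)) b :
  is_spec_norm B b ->
  nn (B *m Bd *m (1%:M - A *m Ad)) <= b ^+ 2 * nn (Bd *m (1%:M - A *m Ad)).
Proof. by move=> hB; rewrite -mulmxA; apply: spec_mxl. Qed.

Lemma S3 (C : numClosedFieldType) m n (A B : 'M[C]_(m, n)) (Ad Bd : 'M[C]_(n, m)) a :
  is_pinv A Ad -> is_spec_norm A a ->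
  nn (A *m (1%:M - Bd *m B)) <= a ^+ 2 * nn (Ad *m A *m (1%:M - Bd *m B)).
Proof.
case=> a1 a2 a3 a4 hA.
have -> : A *m (1%:M - Bd *m B) = A *m (Ad *m A *m (1%:M - Bd *m B))
  by rewrite !mulmxA a1.
exact: spec_mxl.
Qed.

Lemma S4 (C : numClosedFieldType) m n (A B : 'M[C]_(m, n)) (Ad Bd : 'M[C]_(n, m)) a :
  is_pinv A Ad -> is_pinv B Bd -> is_spec_norm A a ->
  nn (Ad *m A *m (1%:M - Bd *m B)) <= a ^+ 2 * nn ((1%:M - Bd *m B) *m Ad).
Proof.
case=> a1 a2 a3 a4 [b1 b2 b3 b4] hA.
rewrite -nnC ctrmxM a4 hermC // mulmxA.
exact: spec_mxr.
Qed.

Lemma proj_sym (C : numClosedFieldType) n (P Q : 'M[C]_n) :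
  ctrmx P = P -> P *m P = P -> ctrmx Q = Q -> Q *m Q = Q -> \rank P = \rank Q ->
  nn (P *m (1%:M - Q)) = nn (Q *m (1%:M - P)).
Proof.
move=> hP iP hQ iQ r.
have key : forall (X Y : 'M[C]_n), ctrmx X = X -> X *m X = X -> ctrmx Y = Y ->
    Y *m Y = Y -> nn (X *m (1%:M - Y)) = \tr X - \tr (X *m Y).
  move=> X Y hX iX hY iY.
  rewrite nnE ctrmxM hermC // hX mulmxA -(mulmxA X) idemC //.
  by rewrite mxtrace_mulC mulmxA iX mulmxBr mulmx1 linearB.
rewrite !key // (tr_idem iP) (tr_idem iQ) r; congr (_ - _); exact: mxtrace_mulC.
Qed.

Lemma rankQ (C : numClosedFieldType) m n (A : 'M[C]_(m, n)) (Ad : 'M[C]_(n, m)) :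
  is_pinv A Ad -> \rank (A *m Ad) = \rank A /\ \rank (Ad *m A) = \rank A.
Proof.
case=> a1 a2 a3 a4; split; apply/eqP; rewrite eqn_leq.
  rewrite mxrankM_maxl /=.
  by rewrite -{1}a1 mxrankM_maxl.
rewrite mxrankM_maxr /=.
by rewrite -{1}a1 -mulmxA mxrankM_maxr.
Qed.

Lemma num1 (C : numClosedFieldType) (nE x1 x2 x3 p q t2 t3 ca cb M n1 : C) :
  nE = x1 + x2 + x3 -> x1 <= p -> x1 <= q -> x2 <= cb * t2 -> x3 <= ca * t3 ->
  0 <= t2 -> 0 <= t3 -> 0 <= ca -> 0 <= cb -> ca <= M -> cb <= M ->
  (nE - Num.min p q) / M + n1 <= n1 + t2 + t3.
Proof.
move=> hE h1p h1q h2 h3 t20 t30 ca0 cb0 caM cbM.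
have M0 : 0 <= M := le_trans ca0 caM.
have hmin : x1 <= Num.min p q by rewrite /Order.min; case: ifP.
have hN : nE - Num.min p q <= (t2 + t3) * M.
  have -> : nE - Num.min p q = (x2 + x3) + (x1 - Num.min p q) by rewrite hE; ring.
  apply: ler_wnDr; first by rewrite subr_le0.
  rewrite mulrDl; apply: lerD.
    by apply: (le_trans h2); rewrite mulrC ler_wpM2l.
  by apply: (le_trans h3); rewrite mulrC ler_wpM2l.
have -> : n1 + t2 + t3 = (t2 + t3) + n1 by ring.
rewrite lerD2r.
case: (M =P 0) => [-> | Mn0].
  by rewrite invr0 mulr0 addr_ge0.
have Mpos : 0 < M by rewrite lt_def M0 andbT; apply/eqP.
by rewrite ler_pdivrMr.
Qed.

Lemma maxge (C : numClosedFieldType) (x y : C) : 0 <= x -> 0 <= y ->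
  x <= Num.max x y /\ y <= Num.max x y.
Proof.
move=> x0 y0; rewrite /Order.max; case: ifP => h; split => //.
  exact: ltW.
by rewrite real_leNgt ?ger0_real ?h.
Qed.

Lemma max_le (C : numClosedFieldType) (x y z : C) :
  x <= z -> y <= z -> Num.max x y <= z.
Proof. by rewrite /Order.max; case: ifP. Qed.

Lemma e4 (C : numClosedFieldType) (x : C) : x ^+ 4 = x ^+ 2 * x ^+ 2.
Proof. by rewrite -exprD. Qed.

Lemma half1 (C : numClosedFieldType) m n (A B : 'M[C]_(m, n)) (Ad Bd : 'M[C]_(n, m))
  a b M :
  is_pinv A Ad -> is_pinv B Bd -> is_spec_norm A a -> is_spec_norm B b ->
  a ^+ 4 <= M -> b ^+ 4 <= M ->
  (nn (B - A) - Num.min (b ^+ 2 * nn (A *m Ad *m (B - A) *m Bd))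
                        (a ^+ 2 * nn (Ad *m (B - A) *m Bd *m B))) / M
   + nn (Bd *m (B - A) *m Ad) <= nn (Bd - Ad).
Proof.
move=> hA hB sA sB aM bM.
rewrite (D1 hA hB).
apply: (@num1 C _ _ _ _ _ _ _ _ (a ^+ 4) (b ^+ 4) M _ (D2 hA hB) _ _ _ _ _ _ _ _ aM bM).
- exact: (spec_mxr sB).
- have -> : A *m Ad *m (B - A) *m Bd *m B = A *m (Ad *m (B - A) *m Bd *m B)
    by rewrite !mulmxA.
  exact: (spec_mxl sA).
- apply: (le_trans (S1 hA hB sB)).
  by rewrite e4 -mulrA ler_wpM2l ?exprn_ge0 ?(spec_ge0 sB) // S2.
- apply: (le_trans (S3 B Bd hA sA)).
  by rewrite e4 -mulrA ler_wpM2l ?exprn_ge0 ?(spec_ge0 sA) // S4.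
- exact: nn_ge0.
- exact: nn_ge0.
- by rewrite exprn_ge0 ?(spec_ge0 sA).
- by rewrite exprn_ge0 ?(spec_ge0 sB).
Qed.

Lemma half2 (C : numClosedFieldType) m n (A B : 'M[C]_(m, n)) (Ad Bd : 'M[C]_(n, m))
  a b :
  is_pinv A Ad -> is_pinv B Bd -> is_spec_norm A a -> is_spec_norm B b ->
  \rank B = \rank A ->
  (nn (B - A) - Num.min (a ^+ 2 * nn (B *m Bd *m (B - A) *m Ad))
                        (b ^+ 2 * nn (Bd *m (B - A) *m Ad *m A))) / (a ^+ 2 * b ^+ 2)
   + nn (Bd *m (B - A) *m Ad) <= nn (Bd - Ad).
Proof.
move=> hA hB sA sB r.
have a0 := spec_ge0 sA; have b0 := spec_ge0 sB.
have [rQA rPA] := rankQ hA; have [rQB rPB] := rankQ hB.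
have hA' := hA; have hB' := hB.
case: hA' => a1 a2 a3 a4; case: hB' => b1 b2 b3 b4.
have iQA : A *m Ad *m (A *m Ad) = A *m Ad by rewrite mulmxA a1.
have iPA : Ad *m A *m (Ad *m A) = Ad *m A by rewrite mulmxA a2.
have iQB : B *m Bd *m (B *m Bd) = B *m Bd by rewrite mulmxA b1.
have iPB : Bd *m B *m (Bd *m B) = Bd *m B by rewrite mulmxA b2.
rewrite (D1 hA hB).
have eN : nn (B - A) = nn (A - B) by rewrite -opprB nnN.
have -> : nn (B *m Bd *m (B - A) *m Ad) = nn (B *m Bd *m (A - B) *m Ad).
  by rewrite -(opprB B A) mulmxN mulNmx nnN.
have -> : nn (Bd *m (B - A) *m Ad *m A) = nn (Bd *m (A - B) *m Ad *m A).
  by rewrite -(opprB B A) mulmxN !mulNmx nnN.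
rewrite eN.
have ab : 0 <= a ^+ 2 * b ^+ 2 by rewrite mulr_ge0 ?exprn_ge0.
apply: (@num1 C _ _ _ _ _ _ _ _ (a ^+ 2 * b ^+ 2) (a ^+ 2 * b ^+ 2) _ _ (D2 hB hA) _ _ _ _ _ _ ab ab (lexx _) (lexx _)).
- exact: (spec_mxr sA).
- have -> : B *m Bd *m (A - B) *m Ad *m A = B *m (Bd *m (A - B) *m Ad *m A)
    by rewrite !mulmxA.
  exact: (spec_mxl sB).
- apply: (le_trans (S1 hB hA sA)).
  rewrite (proj_sym a3 iQA b3 iQB); last by rewrite rQA rQB r.
  by rewrite -mulrA ler_wpM2l ?exprn_ge0 // S2.
- apply: (le_trans (S3 A Ad hB sB)).
  rewrite (proj_sym b4 iPB a4 iPA); last by rewrite rPA rPB r.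
  by rewrite (mulrC (a ^+ 2) (b ^+ 2)) -[X in _ <= X]mulrA ler_wpM2l ?exprn_ge0 // S4.
- exact: nn_ge0.
- exact: nn_ge0.
Qed.


Theorem theorem3p9 (C : numClosedFieldType) (m n : nat)
  (A B : 'M[C]_(m, n)) (Ad Bd : 'M[C]_(n, m)) (a b : C) :
  is_pinv A Ad -> is_pinv B Bd -> is_spec_norm A a -> is_spec_norm B b ->
  let E := B - A in
  let delta1 := (fnorm E ^+ 2
        - Num.min (b ^+ 2 * fnorm (A *m Ad *m E *m Bd) ^+ 2)
                  (a ^+ 2 * fnorm (Ad *m E *m Bd *m B) ^+ 2))
        / Num.max (a ^+ 4) (b ^+ 4) in
  let delta2 := (fnorm E ^+ 2
        - Num.min (a ^+ 2 * fnorm (B *m Bd *m E *m Ad) ^+ 2)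
                  (b ^+ 2 * fnorm (Bd *m E *m Ad *m A) ^+ 2))
        / Num.max (a ^+ 4) (b ^+ 4) in
  let eps1 := (fnorm E ^+ 2
        - Num.min (a ^+ 2 * fnorm (B *m Bd *m E *m Ad) ^+ 2)
                  (b ^+ 2 * fnorm (Bd *m E *m Ad *m A) ^+ 2))
        / (a ^+ 2 * b ^+ 2) in
  let eps2 := (fnorm E ^+ 2
        - Num.min (b ^+ 2 * fnorm (A *m Ad *m E *m Bd) ^+ 2)
                  (a ^+ 2 * fnorm (Ad *m E *m Bd *m B) ^+ 2))
        / (a ^+ 2 * b ^+ 2) in
  Num.max (delta1 + fnorm (Bd *m E *m Ad) ^+ 2)
          (delta2 + fnorm (Ad *m E *m Bd) ^+ 2) <= fnorm (Bd - Ad) ^+ 2 /\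
  (\rank B = \rank A ->
   Num.max (eps1 + fnorm (Bd *m E *m Ad) ^+ 2)
           (eps2 + fnorm (Ad *m E *m Bd) ^+ 2) <= fnorm (Bd - Ad) ^+ 2).
Proof.
move=> hA hB sA sB E d1 d2 e1 e2.
rewrite /d1 /d2 /e1 /e2 /E !fnormE.
have a0 := spec_ge0 sA; have b0 := spec_ge0 sB.
have [aM bM] := maxge (exprn_ge0 4 a0) (exprn_ge0 4 b0).
have sw1 : nn (A - B) = nn (B - A) by rewrite -opprB nnN.
have sw2 : nn (Ad - Bd) = nn (Bd - Ad) by rewrite -opprB nnN.
have sw3 : forall p q (X : 'M[C]_(p, m)) (Y : 'M[C]_(n, q)),
    nn (X *m (A - B) *m Y) = nn (X *m (B - A) *m Y).
  by move=> p q X Y; rewrite -(opprB B A) mulmxN mulNmx nnN.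
have sw4 : forall p q r (X : 'M[C]_(p, m)) (Y : 'M[C]_(n, q)) (Z : 'M[C]_(q, r)),
    nn (X *m (A - B) *m Y *m Z) = nn (X *m (B - A) *m Y *m Z).
  by move=> p q r X Y Z; rewrite -(opprB B A) mulmxN !mulNmx nnN.
split.
  apply: max_le.
    exact: half1 hA hB sA sB aM bM.
  have := half1 hB hA sB sA bM aM.
  by rewrite sw1 sw2 !sw3 !sw4.
move=> r; apply: max_le.
  exact: half2 hA hB sA sB r.
have := half2 hB hA sB sA (esym r).
by rewrite sw1 sw2 !sw3 !sw4 (mulrC (b ^+ 2) (a ^+ 2)).
Qed.
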